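(* Let $h,k,m$ be integers with $h\ge1$, $k\ge1$, $\gcd(h,k)=1$, $1\le m\le d=h+k$. Then $\det A_m(h,k)=(-1)^{(d-1)(m-1)}\left[\frac{k}{d}\right]$. In particular $\det K(h,k)=\left[\frac{k}{d}\right]$.
   Context: For $h,k\ge1$ coprime and $d=h+k$, $A_m(h,k)$ ($1\le m\le d$) is the $d\times d$ permutation matrix with $(i,j)$ entry $1$ if $j=\sigma(i)$ and $0$ otherwise, where $\sigma(i)\in\{1,\dots,d\}$ is determined by $\sigma(i)\equiv ki+m-k\pmod d$. The $(d,d)$ entry of $A_k(h,k)$ is $1$, and $K(h,k)$ is the $(d-1)\times(d-1)$ upper-left block of $A_k(h,k)$ (so $A_k(h,k)=\begin{pmatrix}K(h,k)&0\\0&1\end{pmatrix}$). For integers $d\ge1$, $k$ with $\gcd(d,k)=1$, $\left[\frac{k}{d}\right]$ denotes the signature of the permutation $x\mapsto kx$ of $\mathbb{Z}/d\mathbb{Z}$. *)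

(* Defs.v *)
From mathcomp Require Import all_boot all_order all_algebra all_fingroup.
Set Implicit Arguments. Unset Strict Implicit. Unset Printing Implicit Defensive.
Import GRing.Theory Num.Theory.
Local Open Scope ring_scope.

(* Z/dZ is represented by 'I_d = {0,...,d-1}. *)
Lemma ord_pos (d : nat) (x : 'I_d) : (0 < d)%N.
Proof. exact: leq_ltn_trans (leq0n x) (ltn_ord x). Qed.

Definition mulmod (d k : nat) (x : 'I_d) : 'I_d :=
  Ordinal (ltn_pmod (k * x) (ord_pos x)).

(* [k/d] : the signature of the permutation x |-> k x of Z/dZ
   (0 by convention if it is not a permutation, i.e. gcd(d,k) <> 1). *)
Definition jsym (d k : nat) : int :=
  match [pick s : 'S_d | [forall x, s x == mulmod k x]] with
  | Some s => (-1) ^+ (odd_perm s)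
  | None => 0
  end.

(* A_m(h,k), with rows/columns i,j in {1..d} encoded as i.+1, j.+1 for
   i, j : 'I_d : entry (i,j) is 1 iff j = sigma(i), where sigma(i) in {1..d}
   and sigma(i) = k i + m - k (mod d). *)
Definition Amat (h k m : nat) : 'M[int]_(h + k) :=
  \matrix_(i < h + k, j < h + k)
    (if (((j.+1)%:Z == (k%:Z * (i.+1)%:Z + m%:Z - k%:Z) %[mod (h + k)%:Z])%Z)
     then 1 else 0).

Definition Kmat (h k : nat) : 'M[int]_((h + k).-1) :=
  \matrix_(i < (h + k).-1, j < (h + k).-1)
    Amat h k k (widen_ord (leq_pred _) i) (widen_ord (leq_pred _) j).

(* Main.v *)
Require Import Defs.
From mathcomp Require Import all_boot all_order all_algebra all_fingroup.
From mathcomp Require Import zify.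
Import GRing.Theory Num.Theory.
Local Open Scope ring_scope.

Section Aff.
Variable d : nat.
Hypothesis dpos : (0 < d)%N.

Definition affF (a b : nat) (x : 'I_d) : 'I_d := Ordinal (ltn_pmod (a * x + b) dpos).

Lemma affF_inj a b : coprime a d -> injective (affF a b).
Proof.
move=> co.
suff H : forall x y : 'I_d, (x <= y)%N -> affF a b x = affF a b y -> x = y.
  move=> x y E; case: (leqP x y) => xy; first exact: H.
  by apply/esym/H => //; apply: ltnW.
move=> x y xy /(congr1 val) /= /eqP; rewrite eqn_modDr eq_sym eqn_mod_dvd; last exact: leq_mul.
rewrite -mulnBr Gauss_dvdr; last by rewrite coprime_sym.
move=> dv; apply/val_inj/eqP; rewrite eqn_leq xy /=.
have lt : (y - x < d)%N by apply: leq_ltn_trans (leq_subr _ _) (ltn_ord y).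
have : (y - x)%N = 0%N by move: dv; rewrite /dvdn modn_small // => /eqP.
by move/eqP; rewrite subn_eq0.
Qed.

Definition aff a b (co : coprime a d) : 'S_d := perm (@affF_inj a b co).

Lemma affE a b co x : val (@aff a b co x) = ((a * x + b) %% d)%N.
Proof. by rewrite permE. Qed.

Definition rot : 'S_d := @aff 1 1 (coprime1n d).

Lemma rotX b (x : 'I_d) : val ((rot ^+ b)%g x) = ((x + b) %% d)%N.
Proof.
elim: b => [|b IH]; first by rewrite expg0 perm1 addn0 modn_small.
by rewrite expgSr permM affE IH mul1n modnDml addn1 addnS.
Qed.

Lemma aff_decomp a b co : @aff a b co = (@aff a 0 co * rot ^+ b)%g.
Proof.
apply/permP => x; apply/val_inj.
by rewrite permM rotX !affE addn0 modnDml.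
Qed.

Lemma odd_rotX b : odd_perm (rot ^+ b)%g = odd b && odd_perm rot.
Proof.
elim: b => [|b IH]; first by rewrite expg0 odd_perm1.
by rewrite expgSr odd_permM IH /=; case: (odd b); case: (odd_perm rot).
Qed.

End Aff.

Lemma odd_rot d (dpos : (0 < d)%N) : odd_perm (@rot d dpos) = odd d.-1.
Proof.
case: d dpos => // n dpos.
have -> : @rot n.+1 dpos = lift_perm ord_max ord0 1.
  apply/permP => x; apply/val_inj; rewrite affE mul1n.
  case: (unliftP ord_max x) => [j|] ->.
    rewrite lift_perm_lift perm1 /= /bump leqNgt ltn_ord /= add0n addnC modn_small //.
    by rewrite add1n ltnS ltn_ord.
  by rewrite lift_perm_id /= addn1 modnn.
by rewrite odd_lift_perm odd_perm1 addbF /= addbF.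
Qed.
Lemma sign_aff d (dpos : (0 < d)%N) a b co :
  ((-1) ^+ odd_perm (@aff d dpos a b co) : int) =
  (-1) ^+ (d.-1 * b) * (-1) ^+ odd_perm (@aff d dpos a 0 co).
Proof.
rewrite aff_decomp odd_permM signr_addb odd_rotX odd_rot mulrC; congr (_ * _).
by rewrite -[RHS]signr_odd oddM andbC.
Qed.

Lemma jsym_aff d (dpos : (0 < d)%N) k co :
  jsym d k = (-1) ^+ odd_perm (@aff d dpos k 0 co).
Proof.
have E : forall x, @aff d dpos k 0 co x = mulmod k x.
  by move=> x; apply/val_inj; rewrite affE addn0.
rewrite /jsym; case: pickP => [s /forallP Hs | H].
  have -> : s = @aff d dpos k 0 co by apply/permP => x; rewrite E; apply/eqP.
  by [].
have := H (@aff d dpos k 0 co); move/negbT/negP; case.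
by apply/forallP => x; rewrite E.
Qed.

Lemma Amat_perm h k m (dpos : (0 < h + k)%N) co : (1 <= m)%N ->
  Amat h k m = perm_mx (@aff (h + k) dpos k m.-1 co).
Proof.
move=> m1; apply/matrixP => i j; rewrite /Amat /perm_mx !mxE.
have -> : (k%:Z * (i.+1)%:Z + m%:Z - k%:Z)%R = ((k * i + m.-1).+1)%:Z.
  rewrite -[in LHS](prednK m1); nia.
rewrite !modz_nat eqz_nat -[j.+1]addn1 -[(k * i + m.-1).+1]addn1 eqn_modDr.
rewrite (modn_small (ltn_ord j)).
have -> : (@aff (h + k) dpos k m.-1 co i == j) = (nat_of_ord j == (k * i + m.-1) %% (h + k))%N.
  by rewrite eq_sym -(inj_eq val_inj) /= affE.
by case: eqP.
Qed.

Lemma parity h k : (1 <= h)%N -> (1 <= k)%N -> coprime h k ->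
  ~~ odd ((h + k).-1 * k.-1).
Proof.
move=> h1 k1 co.
have oo : odd h || odd k.
  apply/negPn/negP => /norP [eh ek].
  have : (2 %| gcdn h k)%N by rewrite dvdn_gcd !dvdn2 eh ek.
  by rewrite (eqP co).
have ok : odd k = ~~ odd k.-1 by rewrite -{1}(prednK k1).
have ohk : odd (h + k) = ~~ odd (h + k).-1.
  by rewrite -{1}(@prednK (h + k)) // addn_gt0 h1.
move: oo ok ohk; rewrite oddM oddD.
by case: (odd h); case: (odd k); case: (odd k.-1); case: (odd (h + k).-1).
Qed.

Theorem proposition3 (h k m : nat) :
  (1 <= h)%N -> (1 <= k)%N -> coprime h k -> (1 <= m <= h + k)%N ->
  \det (Amat h k m) = (-1) ^+ ((h + k).-1 * m.-1) * jsym (h + k) k /\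
  \det (Kmat h k) = jsym (h + k) k.
Proof.
move=> h1 k1 co /andP[m1 mle].
have dpos : (0 < h + k)%N by rewrite addn_gt0 h1.
have cok : coprime k (h + k) by rewrite /coprime gcdnDr -/(coprime k h) coprime_sym.
have detA : forall m', (1 <= m')%N ->
    \det (Amat h k m') = (-1) ^+ ((h + k).-1 * m'.-1) * jsym (h + k) k.
  move=> m' m1'; rewrite (@Amat_perm h k m' dpos cok m1') det_perm sign_aff.
  by rewrite -(@jsym_aff _ dpos).
split; first exact: detA.
have ltl : ((h + k).-1 < h + k)%N by rewrite ltn_predL.
pose last := Ordinal ltl.
pose s := @aff (h + k) dpos k k.-1 cok.
have Ae : forall i j, Amat h k k i j = (s i == j)%:R.
  by move=> i j; rewrite (@Amat_perm h k k dpos cok k1) /perm_mx !mxE.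
have sl : s last = last.
  apply/val_inj; rewrite affE /=.
  have -> : (k * (h + k).-1 + k.-1 = k.-1 * (h + k) + (h + k).-1)%N.
    rewrite -(prednK dpos) -(prednK k1) /=; nia.
  by rewrite modnMDl modn_small.
have -> : \det (Kmat h k) = \det (Amat h k k).
  rewrite (expand_det_row _ last) (bigD1 last) //= big1 ?addr0; last first.
    by move=> j jl; rewrite Ae sl eq_sym (negbTE jl) mul0r.
  rewrite Ae sl eqxx mul1r /cofactor addnn -signr_odd odd_double expr0 mul1r.
  congr (\det _); apply/matrixP => i j; rewrite /Kmat !mxE.
  have wl : forall x : 'I_(h + k).-1, widen_ord (leq_pred _) x = lift last x.
    by move=> x; apply/val_inj; rewrite /= /bump leqNgt ltn_ord.
  by rewrite !wl.
rewrite detA // -signr_odd (negbTE (parity h k h1 k1 co)) expr0 mul1r //.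
Qed.
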